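(* Let $N,n,q\ge1$, let $A\in\mathbb{R}^{n\times n}$, $B_v\in\mathbb{R}^{n\times q}$, $G\in\mathbb{R}^{q\times n}$, $B_u\in\mathbb{R}^{n\times 1}$, $C\in\mathbb{R}^{1\times n}$ and $M\in\mathbb{R}^{N\times N}$, and suppose $K:=(I_N\otimes A)+M\otimes(B_vG)$ is invertible. Define the linear map $L:\mathbb{R}^N\to\mathbb{R}^N$ by $$L\tilde u=-(I_N\otimes C)\,K^{-1}\,(I_N\otimes B_u)\,\tilde u$$ (the steady-state input-to-readout map of the linear system $\dot{\tilde x}=K\tilde x+(I_N\otimes B_u)\tilde u$, $\tilde y=(I_N\otimes C)\tilde x$). If $\Pi\in\mathbb{R}^{N\times N}$ is invertible and $\Pi M=M\Pi$, then $L\Pi=\Pi L$, i.e. for every $\tilde u\in\mathbb{R}^N$, $L(\Pi\tilde u)=\Pi(L\tilde u)$.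
   Context: $\otimes$ denotes the Kronecker product and $I_m$ the $m\times m$ identity matrix. In the paper's setting, this describes a network of $N$ identical cells linearized about a homogeneous steady state, with $M$ the interconnection matrix. *)

(* Defs.v *)
From mathcomp Require Import all_boot all_order all_algebra.
From mathcomp Require Export mxtens.
From mathcomp Require Import reals.
Set Implicit Arguments. Unset Strict Implicit. Unset Printing Implicit Defensive.
Import GRing.Theory Num.Theory.
Local Open Scope ring_scope.

Definition Kmat (R : realType) (N n q : nat) (A : 'M[R]_n) (Bv : 'M[R]_(n, q))
  (G : 'M[R]_(q, n)) (M : 'M[R]_N) : 'M[R]_(N * n) :=
  (1%:M *t A) + (M *t (Bv *m G)).

(* L u := - (I_N (x) C) K^{-1} (I_N (x) Bu) u, acting on column vectors in R^N;
   the dimension N*1 of I_N (x) Bu / I_N (x) C is identified with N by castmx. *)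
Definition Lmap (R : realType) (N n q : nat) (A : 'M[R]_n) (Bv : 'M[R]_(n, q))
  (G : 'M[R]_(q, n)) (Bu : 'M[R]_(n, 1)) (C : 'M[R]_(1, n)) (M : 'M[R]_N)
  (u : 'cV[R]_N) : 'cV[R]_N :=
  castmx (muln1 N, erefl 1%N)
   (- (((1%:M : 'M[R]_N) *t C) *m invmx (Kmat A Bv G M)
       *m ((1%:M : 'M[R]_N) *t Bu) *m castmx (esym (muln1 N), erefl 1%N) u)).

(* Main.v *)
Require Import Defs.
From mathcomp Require Import all_boot all_order all_algebra.
From mathcomp Require Import mxtens reals.
Import GRing.Theory Num.Theory.
Local Open Scope ring_scope.

Lemma castmx_mulmx2 (R : pzRingType) m m' n n' p p' (e1 : m = m') (e2 : n = n')
  (e3 : p = p') (A : 'M[R]_(m, n)) (B : 'M[R]_(n, p)) :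
  castmx (e1, e2) A *m castmx (e2, e3) B = castmx (e1, e3) (A *m B).
Proof. by case: m' / e1; case: n' / e2; case: p' / e3; rewrite !castmx_id. Qed.

Theorem mainTheorem2 (R : realType) (N n q : nat)
  (hN : (1 <= N)%N) (hn : (1 <= n)%N) (hq : (1 <= q)%N)
  (A : 'M[R]_n) (Bv : 'M[R]_(n, q)) (G : 'M[R]_(q, n))
  (Bu : 'M[R]_(n, 1)) (C : 'M[R]_(1, n)) (M : 'M[R]_N)
  (hK : Kmat A Bv G M \in unitmx)
  (Pi : 'M[R]_N) (hPi : Pi \in unitmx) (hPM : Pi *m M = M *m Pi) :
  forall u : 'cV[R]_N, Lmap A Bv G Bu C M (Pi *m u) = Pi *m Lmap A Bv G Bu C M u.
Proof.
move=> u.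
set K := Kmat A Bv G M.
set P := Pi *t (1%:M : 'M[R]_n).
set P1 := Pi *t (1%:M : 'M[R]_1).
have hP1 : P1 = castmx (esym (muln1 N), esym (muln1 N)) Pi.
  by rewrite /P1 tens_mx_scalar scale1r.
have hPK : P *m K = K *m P.
  by rewrite /P /K /Kmat mulmxDr mulmxDl !tensmx_mul !mul1mx !mulmx1 hPM.
have hKi : invmx K *m P = P *m invmx K.
  rewrite -[LHS]mulmx1 -(mulmxV hK) !mulmxA -[invmx K *m P *m K]mulmxA hPK.
  by rewrite !mulmxA mulVmx // mul1mx.
have hB : ((1%:M : 'M[R]_N) *t Bu) *m P1 = P *m ((1%:M : 'M[R]_N) *t Bu).
  by rewrite /P /P1 !tensmx_mul !mul1mx !mulmx1.
have hC : ((1%:M : 'M[R]_N) *t C) *m P = P1 *m ((1%:M : 'M[R]_N) *t C).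
  by rewrite /P /P1 !tensmx_mul !mul1mx !mulmx1.
have hu : castmx (esym (muln1 N), erefl 1%N) (Pi *m u)
          = P1 *m castmx (esym (muln1 N), erefl 1%N) u.
  by rewrite hP1 castmx_mulmx2.
rewrite /Lmap hu -/K !mulmxA.
rewrite -[_ *m (1%:M *t Bu) *m P1]mulmxA hB mulmxA.
rewrite -[_ *m invmx K *m P]mulmxA hKi mulmxA hC -!mulmxA.
rewrite -mulmxN.
set W := - _.
rewrite -[in RHS](castmxK (esym (muln1 N)) (esym (muln1 N)) Pi) -hP1.
by rewrite !esymK castmx_mulmx2.
Qed.
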